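(* Let $Q$ be a TC-query with timing sequence $\{\epsilon_1,\dots,\epsilon_k\}$ and expansion list $L=\{L^1,\dots,L^k\}$, where $L^j$ stores $\Omega(Preq(\epsilon_j))$ in the current snapshot. Suppose an incoming edge $\sigma$ (which has the largest timestamp in the current window) matches query edge $\epsilon_i$. Then, among the items of $L$, only the partial matches of $L^i$ (i.e., of $Preq(\epsilon_i)$) need to be updated due to $\sigma$ playing the role of $\epsilon_i$. Moreover: (1) if $i=1$, $\sigma$ is inserted into $L^1$ as a new match of $Preq(\epsilon_1)=\{\epsilon_1\}$; (2) if $i\neq 1$ and $\Omega(L^{i-1})\bowtie\{\sigma\}\neq\emptyset$, then $\Omega(L^{i-1})\bowtie\{\sigma\}$ is inserted into $L^i$ as the new matches of $Preq(\epsilon_i)$, where $\Omega(L^{i-1})$ is the set of partial matches stored in $L^{i-1}$.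
   Context: Streaming graph: a growing sequence of labelled directed edges $\sigma_1,\sigma_2,\dots$ with strictly increasing timestamps; with a window of duration $|W|$, the snapshot at time $t$ contains the edges with timestamps in $(t-|W|,t]$. A query $Q=(V(Q),E(Q),L,\prec)$ has a vertex labelling and a strict partial order $\prec$ (timing order) on its directed edges. A time-constrained match of a (sub)query is a subgraph $g$ of the snapshot with a label-preserving bijection $F$ from query vertices to $V(g)$ such that $\overrightarrow{uv}$ is a query edge iff $\overrightarrow{F(u)F(v)}\in E(g)$, and $\epsilon\prec\epsilon'$ implies the data edge matched to $\epsilon$ has smaller timestamp than that matched to $\epsilon'$. $\Omega(Q')$ denotes the set of matches of subquery $Q'$ in the current snapshot. For subqueries $Q^1,Q^2$ with matches $g_1,g_2$ via $F_1,F_2$, $g_1$ and $g_2$ are compatible if $g_1\cup g_2$ is a time-constrained match of $Q^1\cup Q^2$ via the bijection $F_1\cup F_2$; $\Omega(Q^1)\bowtie\Omega(Q^2)=\{g_1\cup g_2: g_1\in\Omega(Q^1),g_2\in\Omega(Q^2), g_1,g_2 \text{ compatible}\}$ (here $\{\sigma\}$ is regarded as a match of the single-edge subquery $\{\epsilon_i\}$). For $\epsilon\in E(Q)$, $Preq(\epsilon)$ is the subquery induced by $\{\epsilon':\epsilon'\prec\epsilon\}\cup\{\epsilon\}$. A prefix-connected sequence of $Q$ is an ordering $\epsilon_1,\dots,\epsilon_k$ of all edges of $Q$ such that for each $j$ the subquery induced by $\epsilon_1,\dots,\epsilon_j$ is weakly connected. $Q$ is a TC-query (timing-connected query) if it has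 a prefix-connected sequence with $\epsilon_j\prec\epsilon_{j+1}$ for all $j\in[1,k-1]$; this sequence is its timing sequence. The expansion list of a TC-query is $L=\{L^1,\dots,L^k\}$, where item $L^i$ corresponds to the subquery $\{\epsilon_1,\dots,\epsilon_i\}$ (which equals $Preq(\epsilon_i)$) and records the set $\Omega(L^i)$ of its time-constrained matches in the current snapshot. *)

(* Defs.v *)
From mathcomp Require Import all_boot.
From Stdlib Require Import Relations.
Set Implicit Arguments. Unset Strict Implicit. Unset Printing Implicit Defensive.

Record dedge (DV : Type) := DEdge { esrc : DV; edst : DV; etime : nat }.

Definition stream_ok (DV : Type) (str : nat -> dedge DV) : Prop :=
  forall n, etime (str n) < etime (str n.+1).

Definition snapshot (DV : Type) (str : nat -> dedge DV) (W t : nat)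
  : dedge DV -> Prop :=
  fun e => exists m, str m = e /\ etime e <= t /\ t < etime e + W.

Record query (Lbl : Type) := Query {
  qV : finType;
  qE : finType;
  qsrc : qE -> qV;
  qdst : qE -> qV;
  qlab : qV -> Lbl;
  prec : rel qE
}.

Definition query_wf (Lbl : Type) (Q : query Lbl) : Prop :=
  (forall e e' : qE Q, qsrc e = qsrc e' -> qdst e = qdst e' -> e = e') /\
  (forall e : qE Q, ~~ prec e e) /\
  (forall e1 e2 e3 : qE Q, prec e1 e2 -> prec e2 e3 -> prec e1 e3).

(* A (sub)query is given by its edge set; its vertex set is the set of
   endpoints of its edges. *)
Definition in_subV (Lbl : Type) (Q : query Lbl) (Es : {set qE Q}) (u : qV Q)
  : bool := [exists e in Es, (qsrc e == u) || (qdst e == u)].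

Definition Preq (Lbl : Type) (Q : query Lbl) (e : qE Q) : {set qE Q} :=
  [set e' | prec e' e] :|: [set e].

Definition adjE (Lbl : Type) (Q : query Lbl) (Es : {set qE Q})
  (e e' : qE Q) : Prop :=
  e \in Es /\ e' \in Es /\
  [\/ qsrc e = qsrc e', qsrc e = qdst e', qdst e = qsrc e' | qdst e = qdst e'].

Definition weakly_connected (Lbl : Type) (Q : query Lbl) (Es : {set qE Q})
  : Prop :=
  forall e e', e \in Es -> e' \in Es -> clos_refl_trans _ (adjE Es) e e'.

(* s : 'I_k -> qE is an ordering of all edges of Q (bijection),
   prefix-connected, with s_j < s_{j+1} in the timing order: it is a
   timing sequence, and Q is a TC-query. *)
Definition prefix_set (Lbl : Type) (Q : query Lbl) (k : nat)
  (s : 'I_k -> qE Q) (j : nat) : {set qE Q} :=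
  [set s i | i : 'I_k & (i <= j)%N].

Definition timing_sequence (Lbl : Type) (Q : query Lbl) (k : nat)
  (s : 'I_k -> qE Q) : Prop :=
  bijective s /\
  (forall j : 'I_k, weakly_connected (prefix_set s j)) /\
  (forall i j : 'I_k, val j = (val i).+1 -> prec (s i) (s j)).

(* A (partial) match: a partial vertex map F and the partial assignment
   of data edges to query edges (g is the image of the edge assignment). *)
Record pmatch (Lbl : Type) (Q : query Lbl) (DV : Type) := PMatch {
  mv : qV Q -> option DV;
  me : qE Q -> option (dedge DV)
}.

Definition is_match (Lbl : Type) (Q : query Lbl) (DV : Type)
  (dlab : DV -> Lbl) (S : dedge DV -> Prop) (Es : {set qE Q})
  (m : pmatch Q DV) : Prop :=
  (forall u, in_subV Es u <-> mv m u <> None) /\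
  (forall e, e \in Es <-> me m e <> None) /\
  (* F injective (bijection onto V(g)) *)
  (forall u u' x, mv m u = Some x -> mv m u' = Some x -> u = u') /\
  (forall u x, mv m u = Some x -> dlab x = qlab u) /\
  (forall e d, me m e = Some d ->
     S d /\ mv m (qsrc e) = Some (esrc d) /\ mv m (qdst e) = Some (edst d)) /\
  (forall e e' d d', prec e e' -> me m e = Some d -> me m e' = Some d' ->
     etime d < etime d').

Definition Omega (Lbl : Type) (Q : query Lbl) (DV : Type)
  (dlab : DV -> Lbl) (S : dedge DV -> Prop) (Es : {set qE Q})
  : pmatch Q DV -> Prop := is_match dlab S Es.

Definition opt_union (A : Type) (a b : option A) : option A :=
  if a is Some x then Some x else b.

Definition munion (Lbl : Type) (Q : query Lbl) (DV : Type)
  (m1 m2 : pmatch Q DV) : pmatch Q DV :=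
  PMatch (fun u => opt_union (mv m1 u) (mv m2 u))
         (fun e => opt_union (me m1 e) (me m2 e)).

Definition compatible (Lbl : Type) (Q : query Lbl) (DV : Type)
  (dlab : DV -> Lbl) (S : dedge DV -> Prop) (Es1 Es2 : {set qE Q})
  (m1 m2 : pmatch Q DV) : Prop :=
  (forall u x y, mv m1 u = Some x -> mv m2 u = Some y -> x = y) /\
  (forall e d d', me m1 e = Some d -> me m2 e = Some d' -> d = d') /\
  is_match dlab S (Es1 :|: Es2) (munion m1 m2).

Definition join (Lbl : Type) (Q : query Lbl) (DV : Type)
  (dlab : DV -> Lbl) (S : dedge DV -> Prop) (Es1 Es2 : {set qE Q})
  (Om1 Om2 : pmatch Q DV -> Prop) : pmatch Q DV -> Prop :=
  fun m => exists m1 m2, Om1 m1 /\ Om2 m2 /\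
     compatible dlab S Es1 Es2 m1 m2 /\ m = munion m1 m2.

(* {sigma} regarded as a match of the single-edge subquery {e}. *)
Definition edge_match (Lbl : Type) (Q : query Lbl) (DV : Type)
  (e : qE Q) (d : dedge DV) : pmatch Q DV :=
  PMatch (fun u => if u == qsrc e then Some (esrc d)
                   else if u == qdst e then Some (edst d) else None)
         (fun e' => if e' == e then Some d else None).

(* Main.v *)
Require Import Defs.
From mathcomp Require Import all_boot.
From mathcomp Require Import zify.
From Stdlib Require Import FunctionalExtensionality.


Lemma restrict_match (Lbl DV : Type) (dlab : DV -> Lbl) (Q : query Lbl) (S : dedge DV -> Prop) (A : {set qE Q}) (e0 : qE Q) (d : dedge DV) (m : pmatch Q DV) :
  e0 \notin A -> is_match dlab S (A :|: [set e0]) m -> me m e0 = Some d ->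
  exists m1, is_match dlab S A m1 /\ compatible dlab S A [set e0] m1 (edge_match e0 d)
     /\ m = munion m1 (edge_match e0 d).
Proof.
move=> nA Hm Hme.
have Hm' := Hm.
case: Hm' => [Hv [He [Hinj [Hlab [Hed Htime]]]]].
have sub : forall u, in_subV A u -> in_subV (A :|: [set e0]) u.
  move=> u /existsP [e /andP [eA h]]; apply/existsP; exists e; by rewrite inE eA h.
have [Sd [hs hd]] := Hed _ _ Hme.
set m1 := PMatch (fun u => if in_subV A u then mv m u else None)
                 (fun e => if e \in A then me m e else None).
have Heq : m = munion m1 (edge_match e0 d).
  have -> : m = PMatch (mv m) (me m) by case: (m).
  rewrite /munion /=; congr PMatch; apply: functional_extensionality => x /=.
  - case: ifP => hx.
      case E: (mv m x) => [y|] //; exfalso; by apply: ((Hv x).1 (sub _ hx)).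
    case: ifP => [/eqP -> | hs'] /=; first by [].
    case: ifP => [/eqP -> | hd'] /=; first by [].
    case E: (mv m x) => [y|] //; exfalso.
    have : in_subV (A :|: [set e0]) x by apply/(Hv x); rewrite E.
    case/existsP => e /andP []; rewrite !inE => /orP [eA | /eqP ->].
      move=> h; move: hx; rewrite /in_subV => /negbT /existsPn /(_ e); by rewrite eA h.
    by rewrite eq_sym hs' eq_sym hd'.
  - case: ifP => hx.
      case E: (me m x) => [y|] //; exfalso; have hx2 : x \in A :|: [set e0] by rewrite inE hx.
      by apply: ((He x).1 hx2).
    case: ifP => [/eqP -> | hx'] /=; first by [].
    case E: (me m x) => [y|] //; exfalso.
    have : x \in A :|: [set e0] by apply/(He x); rewrite E.
    by rewrite !inE hx hx'.
have Hm1 : is_match dlab S A m1.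
  split; [|split; [|split; [|split; [|split]]]] => /=.
  - by move=> u; case: ifP => h; split => // _; apply/Hv/sub.
  - by move=> e; case: ifP => h; split => // _; apply/He; rewrite inE h.
  - move=> u u' x; case: ifP => _ // h1; case: ifP => _ // h2; exact: Hinj h1 h2.
  - move=> u x; case: ifP => _ // h; exact: Hlab h.
  - move=> e d'; case: ifP => // eA h.
    have [Sd' [hs' hd']] := Hed _ _ h.
    have -> : in_subV A (qsrc e) by apply/existsP; exists e; rewrite eA eqxx.
    have -> : in_subV A (qdst e) by apply/existsP; exists e; rewrite eA eqxx orbT.
    by [].
  - move=> e e' d1 d2 p; case: ifP => // _ h1; case: ifP => // _ h2; exact: Htime p h1 h2.
exists m1; split => //; split => //.
split; [|split].
- move=> u x y /=; case: ifP => // _ h1.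
  case: ifP => [/eqP E [<-] | _]; first by move: h1; rewrite E hs => -[].
  case: ifP => [/eqP E [<-] | _ //]; by move: h1; rewrite E hd => -[].
- move=> e d1 d2 /=; case: ifP => // eA _; case: ifP => // /eqP E.
  by move: nA; rewrite -E eA.
- by rewrite -Heq.
Qed.

Lemma join_match (Lbl DV : Type) (dlab : DV -> Lbl) (Q : query Lbl) (S : dedge DV -> Prop) (A : {set qE Q}) (e0 : qE Q) (d : dedge DV) (m1 : pmatch Q DV) :
  e0 \notin A -> is_match dlab S A m1 ->
  compatible dlab S A [set e0] m1 (edge_match e0 d) ->
  is_match dlab S (A :|: [set e0]) (munion m1 (edge_match e0 d)) /\
  me (munion m1 (edge_match e0 d)) e0 = Some d.
Proof.
move=> nA Hm1 [_ [_ Hu]]; split => //=.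
case E: (me m1 e0) => [x|] /=; last by rewrite eqxx.
exfalso; move: nA; case: Hm1 => _ [He _].
by rewrite (He e0).2 // E.
Qed.


Theorem theorem2 (Lbl DV : Type) (dlab : DV -> Lbl) (Q : query Lbl)
  (HQ : query_wf Q)
  (k : nat) (s : 'I_k -> qE Q) (Hts : timing_sequence s)
  (str : nat -> dedge DV) (Hstr : stream_ok str) (W : nat) (HW : 0 < W)
  (n : nat) (i : 'I_k)
  (* sigma = str n is the incoming edge; the current time is its timestamp *)
  (Hsig : is_match dlab (snapshot str W (etime (str n))) [set s i]
            (edge_match (s i) (str n))) :
  let sigma := str n in
  let S := snapshot str W (etime sigma) in
  (* only L^i is affected by sigma playing the role of eps_i *)
  (forall (j : 'I_k) (m : pmatch Q DV),
      is_match dlab S (Preq (s j)) m -> me m (s i) = Some sigma -> j = i) /\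
  (* (1) *)
  (val i = 0 -> is_match dlab S (Preq (s i)) (edge_match (s i) sigma)) /\
  (* (2) *)
  (forall i' : 'I_k, (val i').+1 = val i ->
     (exists m, join dlab S (Preq (s i')) [set s i]
                  (Omega dlab S (Preq (s i'))) (fun m2 => m2 = edge_match (s i) sigma) m) ->
     forall m : pmatch Q DV,
       (is_match dlab S (Preq (s i)) m /\ me m (s i) = Some sigma) <->
       join dlab S (Preq (s i')) [set s i]
            (Omega dlab S (Preq (s i'))) (fun m2 => m2 = edge_match (s i) sigma) m).
Proof.
move=> sigma S.
case: HQ => [_ [Hirr Htr]].
case: Hts => [[g sg gs] [_ Hnext]].
have sinj : injective s by apply: can_inj sg.
have chain : forall dd (a b : 'I_k), val b = val a + dd.+1 -> prec (s a) (s b).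
  elim=> [|dd IH] a b hb.
    by apply: Hnext; rewrite hb addn1.
  have hc : val a + dd.+1 < k by move: (ltn_ord b); rewrite hb; lia.
  apply: (Htr _ (s (Ordinal hc))); first by apply: IH.
  by apply: Hnext => /=; rewrite hb addnS.
have precE : forall a b : 'I_k, prec (s a) (s b) = (val a < val b).
  move=> a b; apply/idP/idP => h.
    case: (ltngtP (val a) (val b)) => // h'.
      by move: (Hirr (s a)); rewrite (Htr _ _ _ h (chain (val a - val b).-1 b a ltac:(lia))).
    have E : a = b by apply: val_inj.
    by move: (Hirr (s a)); rewrite {2}E h.
  by apply: (chain (val b - val a).-1); lia.
have PreqE : forall (e : qE Q) (j : 'I_k), (e \in Preq (s j)) = (val (g e) <= val j).
  move=> e j; rewrite /Preq !inE -{1 2}(gs e) precE (inj_eq sinj) -val_eqE /=; lia.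
split; [|split].
- move=> j m Hm Hmi.
  case: (Hm) => _ [He [_ [_ [Hed Htime]]]].
  have : s i \in Preq (s j) by apply/He; rewrite Hmi.
  rewrite /Preq !inE => /orP [hp | /eqP h]; last by apply: sinj.
  have : s j \in Preq (s j) by rewrite /Preq !inE eqxx orbT.
  move/He; case E: (me m (s j)) => [d'|] // _.
  have lt := Htime _ _ _ _ hp Hmi E.
  have [[m' [_ [hle _]]] _] := Hed _ _ E.
  rewrite /sigma in lt hle; lia.
- move=> i0.
  have -> : Preq (s i) = [set s i].
    apply/setP => e; rewrite PreqE inE -{2}(gs e) (inj_eq sinj) -val_eqE i0; by rewrite leqn0.
  exact: Hsig.
- move=> i' hi' _ m.
  have PE : Preq (s i) = Preq (s i') :|: [set s i].
    by apply/setP => e; rewrite in_setU in_set1 !PreqE -{3}(gs e) (inj_eq sinj) -val_eqE -hi' leq_eqVlt ltnS orbC.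
  have nA : s i \notin Preq (s i') by rewrite PreqE sg; lia.
  rewrite PE; split.
  + case=> Hm Hmi.
    have [m1 [H1 [H2 H3]]] := @restrict_match _ _ dlab _ S _ _ _ _ nA Hm Hmi.
    by exists m1, (edge_match (s i) sigma).
  + case=> m1 [m2 [Hm1 [-> [Hc ->]]]].
    exact: (@join_match _ _ dlab _ S _ _ _ _ nA Hm1 Hc).
Qed.
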